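(* Let $m\geq2$, $q$ a power of the prime $p$, $\mathcal{S}\leq\mathrm{U}_{2m+1}(\mathbb{F}_q)$ the Sylow $p$-subgroup of lower unitriangular matrices, $\mathcal{A}=\{X_{\mathbbm{1},P,\alpha}\}$ and $\mathcal{A}_0=\{X_{\mathbbm{1},P,0}\}$. Then $C_{\mathcal{S}}(\mathcal{A})\leq\mathcal{A}_0$.
   Context: $\overline{x}=x^q$ on $\mathbb{F}_{q^2}$, applied entrywise. $Q_k$ is the $k\times k$ matrix with $1$ on the skew-diagonal and $0$ elsewhere; $\mathrm{U}_{2m+1}(\mathbb{F}_q)=\{A\in\mathrm{GL}_{2m+1}(\mathbb{F}_{q^2}):\overline{A}^TQ_{2m+1}A=Q_{2m+1}\}$. $B^F=Q_mB^TQ_m$. $P$ is conjugate-skew-persymmetric if $\overline{P}^F=-P$; for a $1\times m$ vector $\alpha$, $P$ is $\alpha$-conjugate-skew-persymmetric if $P+\overline{P}^F=-Q_m\overline{\alpha}^T\alpha$. The elements of $\mathcal{S}$ are exactly $X_{D,P,\alpha}=\begin{pmatrix}(\overline{D}^F)^{-1}&0&0\\ \alpha&1&0\\ DP&-DQ_m\overline{\alpha}^T&D\end{pmatrix}$ with $D$ lower unitriangular $m\times m$, $\alpha$ a $1\times m$ vector, $P$ $\alpha$-conjugate-skew-persymmetric; $\mathcal{A}$ is the set of those with $D=\mathbbm{1}$ (identity), $\mathcal{A}_0$ those with $D=\mathbbm{1}$ and $\alpha=0$. *)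

(* Defs.v *)
From HB Require Import structures.
From mathcomp Require Import all_boot all_order all_algebra all_field.
Set Implicit Arguments. Unset Strict Implicit. Unset Printing Implicit Defensive.
Import GRing.Theory.
Local Open Scope ring_scope.

(* F plays the role of F_{q^2}; conjugation is x |-> x^q, entrywise. *)
Definition conjq (F : finFieldType) (q : nat) (r c : nat) (A : 'M[F]_(r, c)) :
  'M[F]_(r, c) := map_mx (fun x => x ^+ q) A.

Definition Qmx (F : finFieldType) (k : nat) : 'M[F]_k :=
  \matrix_(i < k, j < k) ((i + j)%N == k.-1)%:R.

Definition flipT (F : finFieldType) (m : nat) (B : 'M[F]_m) : 'M[F]_m :=
  Qmx F m *m B^T *m Qmx F m.

Definition unitaryU (F : finFieldType) (q m : nat) (A : 'M[F]_(m + 1 + m)) : Prop :=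
  A \in unitmx /\ (conjq q A)^T *m Qmx F (m + 1 + m) *m A = Qmx F (m + 1 + m).

Definition lower_unitri (F : finFieldType) (n : nat) (A : 'M[F]_n) : Prop :=
  (forall i j : 'I_n, (i < j)%N -> A i j = 0) /\ (forall i : 'I_n, A i i = 1).

Definition inS (F : finFieldType) (q m : nat) (A : 'M[F]_(m + 1 + m)) : Prop :=
  unitaryU q A /\ lower_unitri A.

Definition acsp (F : finFieldType) (q m : nat) (alpha : 'rV[F]_m) (P : 'M[F]_m) : Prop :=
  P + flipT (conjq q P) = - (Qmx F m *m (conjq q alpha)^T *m alpha).

Definition Xmat (F : finFieldType) (q m : nat) (P : 'M[F]_m) (alpha : 'rV[F]_m) :
  'M[F]_(m + 1 + m) :=
  block_mx (block_mx (1%:M : 'M[F]_m) 0 alpha (1%:M : 'M[F]_1)) 0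
           (row_mx P (- (Qmx F m *m (conjq q alpha)^T))) (1%:M : 'M[F]_m).

Definition inA (F : finFieldType) (q m : nat) (X : 'M[F]_(m + 1 + m)) : Prop :=
  exists (P : 'M[F]_m) (alpha : 'rV[F]_m), acsp q alpha P /\ X = Xmat q P alpha.

Definition inA0 (F : finFieldType) (q m : nat) (X : 'M[F]_(m + 1 + m)) : Prop :=
  exists P : 'M[F]_m, acsp q 0 P /\ X = Xmat q P 0.

Definition in_centralizer_S_A (F : finFieldType) (q m : nat) (X : 'M[F]_(m + 1 + m)) : Prop :=
  inS q X /\ forall Y, inA q Y -> X *m Y = Y *m X.

(* Main.v *)
Require Import Defs.
From HB Require Import structures.
From mathcomp Require Import all_boot all_order all_algebra all_field.
From mathcomp Require Import zify.
Set Implicit Arguments. Unset Strict Implicit. Unset Printing Implicit Defensive.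
Import GRing.Theory.
Local Open Scope ring_scope.

Lemma card_roots_le (F : finFieldType) (p : {poly F}) :
  p != 0 -> (#|[set x | root p x]| < size p)%N.
Proof.
move=> p0; rewrite cardE; apply: max_poly_roots => //; last exact: enum_uniq.
by apply/allP => x; rewrite mem_enum inE.
Qed.

Lemma trace_m1 (F : finFieldType) (q : nat) :
  [pchar F].-nat q -> (2 <= q)%N -> #|F| = (q * q)%N -> exists r : F, r + r ^+ q = -1.
Proof.
move=> hq q2 cF.
have fD x y : (x + y) ^+ q = x ^+ q + y ^+ q :> F by rewrite exprDn_pchar.
have fN x : (- x) ^+ q = - x ^+ q :> F by rewrite exprNn_pchar.
have fqq x : (x ^+ q) ^+ q = x :> F by rewrite -exprM -cF expf_card.
pose S := [set t : F | t ^+ q == t].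
have cS : (#|S| <= q)%N.
  have pn0 : ('X^q - 'X : {poly F}) != 0.
    by rewrite -size_poly_eq0 size_polyDl ?size_polyXn // size_polyN size_polyX ltnS.
  have := card_roots_le pn0; rewrite size_polyDl ?size_polyXn ?size_polyN ?size_polyX ?ltnS //.
  apply: leq_trans; apply: subset_leq_card; apply/subsetP => t; rewrite !inE.
  by rewrite /root !hornerE subr_eq0.
have cfib (t : F) : (#|[set r : F | (r + r ^+ q == t)%R]| <= q)%N.
  have pn0 : ('X^q + ('X - t%:P) : {poly F}) != 0.
    by rewrite -size_poly_eq0 size_polyDl ?size_polyXn // size_XsubC ltnS.
  have := card_roots_le pn0; rewrite size_polyDl ?size_polyXn ?size_XsubC ?ltnS //.
  apply: leq_trans; apply: subset_leq_card; apply/subsetP => r; rewrite !inE.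
  by rewrite /root !hornerE => /eqP <-; rewrite subr_eq0 addrC.
case: (pickP [pred r : F | (r + r ^+ q == -1)%R]) => [r /eqP h | hn]; first by exists r.
exfalso.
have m1S : -1 \in S by rewrite inE fN expr1n.
have : (#|F| <= (#|S| - 1) * q)%N.
  have -> : #|F| = (\sum_(r : F) 1)%N by rewrite sum1_card.
  rewrite (partition_big (fun r => r + r ^+ q) (fun t => (t \in S) && (t != -1))) /=.
    rewrite (cardsD1 (-1) S) m1S add1n subn1 /= -sum_nat_const [X in (_ <= X)%N]big_mkcond [X in (X <= _)%N]big_mkcond /=.
    apply: leq_sum => t _; rewrite !inE andbC; case: ifP => // _.
    apply: leq_trans (cfib t); rewrite -sum1_card; apply: eq_leq; by apply: eq_bigl => r; rewrite !inE.
  move=> r _; rewrite inE fD fqq addrC eqxx /=.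
  by apply/eqP => h; move: (hn r); rewrite /= h eqxx.
rewrite cF; move: cS; nia.
Qed.

Section Q.
Variable F : finFieldType.

Lemma revE k (i j : 'I_k) : ((i + j)%N == k.-1) = (j == rev_ord i).
Proof.
have := ltn_ord i; have := ltn_ord j => hj hi.
apply/eqP/eqP => h; first by apply: val_inj => /=; lia.
by rewrite h /=; lia.
Qed.

Lemma QmxE k (i j : 'I_k) : Qmx F k i j = (j == rev_ord i)%:R.
Proof. by rewrite mxE revE. Qed.

Lemma mulQmxE k n (M : 'M[F]_(k, n)) i j : (Qmx F k *m M) i j = M (rev_ord i) j.
Proof.
rewrite mxE (bigD1 (rev_ord i)) //= big1 ?addr0; first by rewrite QmxE eqxx mul1r.
by move=> j' hj'; rewrite QmxE (negbTE hj') mul0r.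
Qed.

Lemma mulmxQE k n (M : 'M[F]_(n, k)) i j : (M *m Qmx F k) i j = M i (rev_ord j).
Proof.
rewrite mxE (bigD1 (rev_ord j)) //= big1 ?addr0; first by rewrite QmxE rev_ordK eqxx mulr1.
move=> j' hj'; rewrite QmxE; case: eqP => [h|]; last by rewrite mulr0.
by case/eqP: hj'; rewrite h rev_ordK.
Qed.

Lemma QQ k : Qmx F k *m Qmx F k = 1%:M.
Proof.
apply/matrixP => i j; rewrite mulQmxE QmxE rev_ordK !mxE eq_sym //.
Qed.

End Q.

Lemma natr_b0 (R : nzRingType) (b : bool) : ~~ b -> b%:R = 0 :> R.
Proof. by case: b. Qed.
Lemma natr_bb (R : nzRingType) (b c : bool) : (b <-> c) -> b%:R = c%:R :> R.
Proof. by move=> h; have -> : b = c by apply/idP/idP => /h. Qed.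

Ltac bsolve := first [apply: natr_b0; apply/eqP => /(congr1 val) /=; lia
  | apply: natr_bb; split => /eqP /(congr1 val) /= h; apply/eqP; (try apply: val_inj); rewrite /=; lia].

Lemma Qblock (F : finFieldType) m : Qmx F (m + 1 + m) =
  block_mx (block_mx 0 0 0 1%:M) (col_mx (Qmx F m) 0) (row_mx (Qmx F m) 0) 0.
Proof.
apply/matrixP => i j; rewrite -(splitK i) -(splitK j).
case: (split i) => [i1|i2]; case: (split j) => [j1|j2] /=;
  rewrite ?block_mxEul ?block_mxEur ?block_mxEdl ?block_mxEdr QmxE.
- rewrite -(splitK i1) -(splitK j1).
  case: (split i1) => [i3|i3]; case: (split j1) => [j3|j3] /=;
  rewrite ?block_mxEul ?block_mxEur ?block_mxEdl ?block_mxEdr !mxE /=;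
  have := ltn_ord i3; have := ltn_ord j3; move=> h1 h2; bsolve.
- rewrite -(splitK i1); case: (split i1) => [i3|i3] /=; rewrite ?col_mxEu ?col_mxEd ?QmxE ?mxE /=;
  have := ltn_ord i3; have := ltn_ord j2; move=> h1 h2; bsolve.
- rewrite -(splitK j1); case: (split j1) => [j3|j3] /=; rewrite ?row_mxEl ?row_mxEr ?QmxE ?mxE /=;
  have := ltn_ord i2; have := ltn_ord j3; move=> h1 h2; bsolve.
- rewrite !mxE /=; have := ltn_ord i2; have := ltn_ord j2; move=> h1 h2; bsolve.
Qed.

Lemma comm_blocks (F : finFieldType) m (L1 : 'M[F]_m) (a : 'rV_m) (B : 'M_m) (c : 'cV_m)
  (L2 : 'M_m) (P : 'M_m) (al : 'rV_m) (w : 'cV_m) :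
  block_mx (block_mx L1 0 a 1%:M) 0 (row_mx B c) L2 *m
     block_mx (block_mx 1%:M 0 al 1%:M) 0 (row_mx P w) 1%:M =
  block_mx (block_mx 1%:M 0 al 1%:M) 0 (row_mx P w) 1%:M *m
     block_mx (block_mx L1 0 a 1%:M) 0 (row_mx B c) L2 ->
  al *m L1 = al /\ L2 *m w = w /\ c *m al + L2 *m P = P *m L1 + w *m a.
Proof.
rewrite !mulmx_block !mulmx0 !mul0mx !mulmx1 !mul1mx !addr0 !add0r.
rewrite !mul_row_block !mul_mx_row ?mulmx0 ?mul0mx ?mulmx1 ?mul1mx ?addr0 ?add0r ?add_row_mx.
move/eq_block_mx => [ul _ dl _].
move/eq_block_mx: ul => [_ _ h _]; move/eq_row_mx: dl => [h1 h2].
split; first by apply: (addrI a); rewrite h addrC.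
split; first by apply: (addIr c); rewrite -h2 addrC.
by apply: (addrI B); rewrite addrA h1 addrC.
Qed.

Lemma conj0 (F : finFieldType) q r c : (0 < q)%N -> conjq q (0 : 'M[F]_(r, c)) = 0.
Proof. by move=> q0; apply/matrixP => i j; rewrite !mxE expr0n eqn0Ngt q0. Qed.

Lemma conj1 (F : finFieldType) q n : (0 < q)%N -> conjq q (1%:M : 'M[F]_n) = 1%:M.
Proof. by move=> q0; apply/matrixP => i j; rewrite !mxE; case: (i == j); rewrite ?expr1n // expr0n eqn0Ngt q0. Qed.

Lemma conj_delta (F : finFieldType) q r c i j : (0 < q)%N -> conjq q (delta_mx i j : 'M[F]_(r, c)) = delta_mx i j.
Proof. by move=> q0; apply/matrixP => i' j'; rewrite !mxE; case: (_ && _); rewrite ?expr1n // expr0n eqn0Ngt q0. Qed.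

Lemma unit_blocks (F : finFieldType) q m (B : 'M[F]_m) : (0 < q)%N ->
  (conjq q (block_mx (block_mx 1%:M 0 0 1%:M) 0 (row_mx B 0) 1%:M : 'M_(m + 1 + m)))^T
     *m Qmx F (m + 1 + m) *m (block_mx (block_mx 1%:M 0 0 1%:M) 0 (row_mx B 0) 1%:M : 'M_(m + 1 + m))
  = Qmx F (m + 1 + m) -> B + flipT (conjq q B) = 0.
Proof.
move=> q0; rewrite -scalar_mx_block /conjq map_block_mx map_row_mx -!/(conjq q _) !conj0 ?conj1 //.
rewrite tr_block_mx tr_row_mx !trmx0 !trmx1 Qblock.
rewrite !mulmx_block !mulmx0 !mul0mx !mulmx1 !mul1mx !addr0 !add0r.
move/eq_block_mx => [ul _ _ _].
move: ul; rewrite !mul_col_row !mulmx0 !mul0mx !add_block_mx add0r => /eq_block_mx [h _ _ _].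
have := congr1 (mulmx (Qmx F m)) h; rewrite mulmx0 mulmxDr !mulmxA QQ mul1mx.
by rewrite /flipT addrC.
Qed.

Lemma rev_eq m (x y : 'I_m) : (rev_ord x == y) = (x == rev_ord y).
Proof. by apply/eqP/eqP => [<-|->]; rewrite rev_ordK. Qed.

Lemma acsp_test (F : finFieldType) q m (r0 : F) (i : 'I_m) : (0 < q)%N ->
  r0 + r0 ^+ q = -1 -> acsp q (delta_mx 0 i) (r0 *: delta_mx (rev_ord i) i).
Proof.
move=> q0 hr; rewrite /acsp conj_delta // trmx_delta /flipT.
apply/matrixP => a b; rewrite [LHS]mxE [RHS]mxE mulmxQE mulQmxE [in RHS]mxE big_ord1 mulQmxE !mxE.
rewrite !rev_eq !rev_ordK.
have qn0 : (q == 0%N) = false by rewrite eqn0Ngt q0.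
case: (a == rev_ord i); case: (b == i) => /=;
  by rewrite ?mulr1 ?mulr0 ?mul1r ?mul0r ?expr0n ?qn0 ?oppr0 ?addr0.
Qed.

Lemma colEntry (F : finFieldType) r c (A : 'M[F]_(r, c)) i j : col i A j 0 = A j i.
Proof. by rewrite mxE. Qed.

Unset Implicit Arguments.

Theorem theorem3p8 (p k : nat) (F : finFieldType) (m : nat) :
  prime p -> (0 < k)%N -> #|F| = ((p ^ k) ^ 2)%N -> (2 <= m)%N ->
  forall X : 'M[F]_(m + 1 + m),
    in_centralizer_S_A (p ^ k) X -> inA0 (p ^ k) X.
Proof.
move=> pp k0 cF m2 X [[hU [tri diag]] hC].
have q2 : (2 <= p ^ k)%N.
  by apply: leq_trans (prime_gt1 pp) _; rewrite -{1}(expn1 p) leq_pexp2l ?(prime_gt0 pp).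
have q0 : (0 < p ^ k)%N by apply: leq_trans q2.
have cF2 : #|F| = (p ^ k * p ^ k)%N by rewrite cF expnS expn1.
have chF : p \in [pchar F] by apply: (card_finPcharP (n := (k * 2)%N)) => //; rewrite cF expnM.
have hq : [pchar F].-nat (p ^ k)%N by rewrite pnatX (eq_pnat _ (pcharf_eq chF)) pnat_id.
have [r0 hr] := trace_m1 hq q2 cF2.
set q := (p ^ k)%N in hU hC q0 hr *.
have XE : X = block_mx (block_mx (ulsubmx (ulsubmx X)) (ursubmx (ulsubmx X))
    (dlsubmx (ulsubmx X)) (drsubmx (ulsubmx X))) (ursubmx X)
    (row_mx (lsubmx (dlsubmx X)) (rsubmx (dlsubmx X))) (drsubmx X).
  by rewrite hsubmxK !submxK.
have hx12 : ursubmx (ulsubmx X) = 0.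
  apply/matrixP => i j; rewrite !mxE; apply: tri => /=.
  exact: leq_trans (ltn_ord i) (leq_addr _ _).
have hd : drsubmx (ulsubmx X) = 1%:M.
  by apply/matrixP => i j; rewrite !ord1 !mxE; apply: diag.
have hU0 : ursubmx X = 0.
  apply/matrixP => i j; rewrite !mxE; apply: tri => /=.
  exact: leq_trans (ltn_ord i) (leq_addr _ _).
move: hC hU; rewrite XE hx12 hd hU0.
move: (ulsubmx (ulsubmx X)) (dlsubmx (ulsubmx X)) (lsubmx (dlsubmx X)) (rsubmx (dlsubmx X)) (drsubmx X).
move=> L1 a B c L2 hC hU; clear XE hx12 hd hU0 tri diag.
have key (i : 'I_m) := comm_blocks (hC (Xmat q (r0 *: delta_mx (rev_ord i) i) (delta_mx 0 i))
   (ex_intro _ _ (ex_intro _ _ (conj (acsp_test i q0 hr) erefl)))).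
have hL1 : L1 = 1%:M.
  by apply/row_matrixP => i; rewrite !rowE mulmx1; case: (key i).
have hL2Q : L2 *m Qmx F m = Qmx F m.
  apply/matrixP => j i; have [_ [h _]] := key i; move: h.
  rewrite conj_delta // trmx_delta mulmxN => /oppr_inj h.
  have : col i (L2 *m Qmx F m) = col i (Qmx F m) by rewrite !colE -mulmxA h.
  by move/(congr1 (fun M : 'cV[F]_m => M j 0)); rewrite !colEntry.
have hL2 : L2 = 1%:M.
  have -> : L2 = L2 *m Qmx F m *m Qmx F m by rewrite -mulmxA QQ mulmx1.
  by rewrite hL2Q QQ.
have h3 (i : 'I_m) : c *m delta_mx 0 i = - (Qmx F m *m delta_mx i 0) *m a.
  have [_ [_ h]] := key i; move: h; rewrite hL1 hL2 mulmx1 mul1mx conj_delta // trmx_delta.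
  by rewrite addrC => /addrI.
pose o0 : 'I_m := Ordinal (ltnW m2); pose o1 : 'I_m := Ordinal m2.
have ha : a = 0.
  apply/rowP => l; have [i ni] : exists i : 'I_m, l != i.
    case: (l =P o0) => [->|h]; [by exists o1 | by exists o0; apply/eqP].
  have := congr1 (fun M : 'M[F]_m => M (rev_ord i) l) (h3 i).
  rewrite mulNmx [in RHS]mxE !mxE !big_ord1 mulQmxE !mxE rev_ordK (negbTE ni) /=.
  by rewrite eqxx mulr0 mul1r => /esym/eqP; rewrite oppr_eq0 => /eqP.
have hc : c = 0.
  apply/colP => j; have := congr1 (fun M : 'M[F]_m => M j o0) (h3 o0).
  by rewrite ha mulmx0 !mxE big_ord1 !mxE !eqxx mulr1.
rewrite hL1 hL2 ha hc in hU *; exists B; split.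
  rewrite /acsp conj0 // trmx0 !mulmx0 oppr0; exact: unit_blocks q0 hU.2.
by rewrite /Xmat conj0 // trmx0 mulmx0 oppr0.
Qed.
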